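(* For every NCIFS $\Phi$ on $X\subset\mathbb R^d$, $\operatorname{HD}(J(\Phi))\le B(\Phi)$.
   Context: Fix $d\in\mathbb N$ and a compact set $X\subset\mathbb R^d$ equal to the closure of its interior, such that $\partial X$ is smooth or $X$ is convex. $\|D\phi\|:=\sup_{x\in X}|\phi'(x)|$ for a conformal map $\phi$. An NCIFS $\Phi$ on $X$ is a sequence $\Phi^{(j)}=(\phi^{(j)}_i:X\to X)_{i\in I^{(j)}}$, $j\ge1$, of families indexed by finite or countably infinite sets, satisfying: - (open set condition) images of $\operatorname{int}X$ under distinct maps of the same $\Phi^{(j)}$ are disjoint; - (conformality) there is an open connected $V\supset X$ such that all maps extend to $C^1$ conformal diffeomorphisms of $V$ into $V$; - (bounded distortion) there is $K\ge1$ with $|\phi'(x)|\le K|\phi'(y)|$ for $x,y\in V$ and every composition $\phi^{(k)}_{\omega_k}\circ\cdots\circ\phi^{(l)}_{\omega_l}$; - (uniform contraction) $\|D\phi^{(j)}_i\|\le\eta<1$ for all $i,j$. For $\omega\in I^n=\prod_{j\le n}I^{(j)}$ let $\phi_\omega=\phi^{(1)}_{\omega_1}\circ\cdots\circ\phi^{(n)}_{\omega_n}$. Define $J(\Phi)=\bigcap_n\bigcup_{\omega\in I^n}\phi_\omega(X)$, $Z_n(t)=\sum_{\omega\in I^n}\|D\phi_\omega\|^t$, $\underline P(t)=\liminf_n\frac1n\log Z_n(t)$ and $B(\Phi)=\sup\{t\ge0:\underline P(t)>0\}$ (with $\sup\emptyset=0$). $\operatorname{HD}$ is Hausdorff dimension.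 *)

(* Defs.v *)
From HB Require Import structures.
From mathcomp Require Import all_boot all_order all_algebra.
From mathcomp Require Import all_classical all_reals all_analysis.
Set Implicit Arguments. Unset Strict Implicit. Unset Printing Implicit Defensive.
Import Order.TTheory GRing.Theory Num.Theory.
Import numFieldNormedType.Exports.
Local Open Scope classical_set_scope.
Local Open Scope ring_scope.

Section NCIFS.
Variables (R : realType) (d : nat).
Local Notation V := 'rV[R]_d.

Definition enorm (v : V) : R := Num.sqrt (\sum_(i < d) v ord0 i ^+ 2).
Definition edist (x y : V) : R := enorm (x - y).

(* |f'(x)| : operator norm (w.r.t. the Euclidean norm) of the differential of f
   at x; for a conformal map this is its scaling factor. *)
Definition dnorm (f : V -> V) (x : V) : R :=
  sup [set enorm ('d f x v) | v in [set v : V | enorm v = 1]].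

Definition Dnorm (X : set V) (f : V -> V) : R := sup [set dnorm f x | x in X].

Definition conformal_at (f : V -> V) (x : V) : Prop :=
  exists2 c : R, 0 < c & forall v : V, enorm ('d f x v) = c * enorm v.

Definition C1_conformal_diffeo_into (U : set V) (f : V -> V) : Prop :=
  [/\ f @` U `<=` U,
      {in U &, injective f} &
    [/\
      (forall x, U x -> differentiable f x),
      (forall x v, U x -> ((fun y => 'd f y v) @ x --> ('d f x v))),
      (forall x, U x -> conformal_at f x) &
      (exists g : V -> V,
         (forall x, U x -> g (f x) = x) /\
         (forall y, (f @` U) y -> differentiable g y) /\
         (forall y w, (f @` U) y -> ((fun z => 'd g z w) @ y --> ('d g y w))))]].

Fixpoint iterD (vs : seq V) (g : V -> R) : V -> R :=
  match vs with [::] => g | v :: vs' => 'D_v (iterD vs' g) end.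

Definition smooth_on (U : set V) (g : V -> R) : Prop :=
  forall (vs : seq V) (x : V), U x ->
    (iterD vs g @ x --> iterD vs g x) /\ (forall v, derivable (iterD vs g) x v).

Definition boundary (X : set V) : set V := closure X `\` interior X.

Definition smooth_boundary (X : set V) : Prop :=
  forall p, boundary X p ->
    exists U : set V, [/\ open U, U p &
      exists g : V -> R, [/\ smooth_on U g,
        (forall x, U x -> exists v, 'D_v g x != 0) &
        (forall x, U x -> (X x <-> g x <= 0))]].

(* Index sets: I j (j >= 1) is the alphabet of the j-th family, encoded as a
   (finite or countably infinite) subset of nat; phi j i is the i-th map of the
   j-th family (given on all of R^d, i.e. it is already the extension to V). *)

Definition words (I : nat -> set nat) (m n : nat) : set (seq nat) :=
  [set w | size w = n /\ forall k, (k < n)%N -> I (m + k)%N (nth 0%N w k)].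

Fixpoint compw (phi : nat -> nat -> V -> V) (m : nat) (w : seq nat) : V -> V :=
  match w with [::] => id | a :: w' => phi m a \o compw phi m.+1 w' end.

Definition is_NCIFS (X : set V) (I : nat -> set nat)
    (phi : nat -> nat -> V -> V) : Prop :=
  [/\ (forall j i, (1 <= j)%N -> I j i -> phi j i @` X `<=` X),
      (forall j i i', (1 <= j)%N -> I j i -> I j i' -> i <> i' ->
         phi j i @` interior X `&` phi j i' @` interior X = set0),
      (exists U : set V, [/\ open U, connected U, X `<=` U &
        ((forall j i, (1 <= j)%N -> I j i -> C1_conformal_diffeo_into U (phi j i)) /\
         (exists2 K : R, 1 <= K & forall k l w x y, (1 <= k)%N ->
            words I k l w -> U x -> U y ->
            dnorm (compw phi k w) x <= K * dnorm (compw phi k w) y))]) &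
      (exists2 eta : R, eta < 1 & forall j i, (1 <= j)%N -> I j i ->
         Dnorm X (phi j i) <= eta)].

Definition limit_set (X : set V) (I : nat -> set nat) (phi : nat -> nat -> V -> V)
  : set V :=
  \bigcap_n \bigcup_(w in words I 1 n) (compw phi 1 w @` X).

Definition elog (z : \bar R) : \bar R :=
  match z with
  | EFin r => if (r <= 0)%R then -oo%E else (ln r)%:E
  | +oo%E => +oo%E
  | -oo%E => -oo%E
  end.

Definition Zn (X : set V) (I : nat -> set nat) (phi : nat -> nat -> V -> V)
    (n : nat) (t : R) : \bar R :=
  \esum_(w in words I 1 n) ((Dnorm X (compw phi 1 w)) `^ t)%:E.

Definition lower_pressure (X : set V) (I : nat -> set nat)
    (phi : nat -> nat -> V -> V) (t : R) : \bar R :=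
  limn_einf (fun n => ((n%:R)^-1)%:E * elog (Zn X I phi n t))%E.

Definition Bowen (X : set V) (I : nat -> set nat) (phi : nat -> nat -> V -> V)
  : \bar R :=
  let S := [set t%:E | t in [set t : R | 0 <= t /\ (0 < lower_pressure X I phi t)%E]] in
  if pselect (S = set0) then 0%E else ereal_sup S.

Definition ediam (U : set V) : R := sup [set edist x y | x in U & y in U].

Definition hweight (s : R) (U : set V) : R :=
  if pselect (U = set0) then 0 else ediam U `^ s.

Definition hausdorff_pre (s delta : R) (A : set V) : \bar R :=
  ereal_inf [set (\sum_(0 <= i <oo) (hweight s (U i))%:E)%E | U in
    [set U : nat -> set V | A `<=` \bigcup_i U i /\
       forall i x y, U i x -> U i y -> edist x y <= delta]].

Definition hausdorff_measure (s : R) (A : set V) : \bar R :=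
  ereal_sup [set hausdorff_pre s delta A | delta in [set delta : R | 0 < delta]].

Definition hausdorff_dim (A : set V) : \bar R :=
  ereal_inf [set s%:E | s in [set s : R | 0 <= s /\ hausdorff_measure s A = 0%E]].

End NCIFS.

(* Main.v *)
Require Import Defs.
From HB Require Import structures.
From mathcomp Require Import all_boot all_order all_algebra.
From mathcomp Require Import all_classical all_reals all_analysis.
From mathcomp Require Import ring lra.
Import Order.TTheory GRing.Theory Num.Theory.
Import numFieldNormedType.Exports.
Local Open Scope classical_set_scope.
Local Open Scope ring_scope.

Set Implicit Arguments. Unset Strict Implicit. Unset Printing Implicit Defensive.

Section Aux.
Variables (R : realType) (d : nat).
Local Notation V := 'rV[R]_d.

Lemma sumsq_ge0 (v : V) : 0 <= \sum_(i < d) v ord0 i ^+ 2.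
Proof. by apply: sumr_ge0 => i _; rewrite sqr_ge0. Qed.

Lemma enorm_ge0 (v : V) : 0 <= enorm v.
Proof. exact: sqrtr_ge0. Qed.

Lemma enorm_sq (v : V) : enorm v ^+ 2 = \sum_(i < d) v ord0 i ^+ 2.
Proof. by rewrite /enorm sqr_sqrtr // sumsq_ge0. Qed.

Lemma enormZ (a : R) (v : V) : enorm (a *: v) = `|a| * enorm v.
Proof.
rewrite /enorm (eq_bigr (fun i => a ^+ 2 * v ord0 i ^+ 2)); last first.
  by move=> i _; rewrite mxE exprMn.
by rewrite -mulr_sumr sqrtrM ?sqr_ge0 // sqrtr_sqr.
Qed.

Lemma enorm_d0 (v : V) : d = 0%N -> enorm v = 0.
Proof. by move=> d0; rewrite /enorm; move: v; rewrite d0 => v; rewrite big_ord0 sqrtr0. Qed.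

Lemma coord_le_norm (v : V) i : `|v ord0 i| <= `|v|.
Proof.
have -> : `|v| = mx_norm v by [].
rewrite mx_normrE.
exact: (le_bigmax 0 (fun ij : 'I_1 * 'I_d => `|v ij.1 ij.2|) (ord0, i)).
Qed.

Lemma enorm_le (v : V) : enorm v <= d%:R * `|v|.
Proof.
rewrite -(ger0_norm (enorm_ge0 v)) -[d%:R * _]ger0_norm ?mulr_ge0 //.
rewrite -ler_sqr ?nnegrE ?normr_ge0 //.
rewrite !real_normK ?num_real // enorm_sq.
apply: (le_trans (y := \sum_(i < d) `|v|^+2)).
  apply: ler_sum => i _; rewrite -real_normK ?num_real //.
  by rewrite lerXn2r ?nnegrE ?normr_ge0 // coord_le_norm.
rewrite sumr_const card_ord exprMn -[_ *+ d]mulr_natl; apply: ler_wpM2r; first by rewrite sqr_ge0.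
case: d => [|n]; first by rewrite expr2 mul0r.
by rewrite expr2 ler_peMl // ler1n.
Qed.

Lemma cauchy_schwarz (a b : V) :
  \sum_(i < d) a ord0 i * b ord0 i <= enorm a * enorm b.
Proof.
have key : forall (A B : R), 0 < A -> 0 < B -> A ^+ 2 = \sum_(i < d) a ord0 i ^+ 2 ->
  B ^+ 2 = \sum_(i < d) b ord0 i ^+ 2 ->
  \sum_(i < d) a ord0 i * b ord0 i <= A * B.
  move=> A B A0 B0 HA HB.
  have h : forall i, 2 * (a ord0 i * b ord0 i) <=
        B / A * a ord0 i ^+ 2 + A / B * b ord0 i ^+ 2.
    move=> i; set x := a ord0 i; set y := b ord0 i.
    have hAB : 0 < A * B by rewrite mulr_gt0.
    suff : 2 * (x * y) * (A * B) <= (B / A * x ^+ 2 + A / B * y ^+ 2) * (A * B).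
      by rewrite ler_pM2r.
    have -> : (B / A * x ^+ 2 + A / B * y ^+ 2) * (A * B) = B^+2 * x^+2 + A^+2 * y^+2.
      by field; rewrite ?gt_eqF.
    have := sqr_ge0 (B * x - A * y); nra.
  have := @ler_sum _ _ (index_enum (ordinal d)) predT _ _ (fun i _ => h i).
  rewrite -mulr_sumr big_split /= -!mulr_sumr -HA -HB.
  have -> : B / A * A ^+ 2 + A / B * B ^+ 2 = 2 * (A * B).
    by field; rewrite ?gt_eqF.
  by rewrite ler_pM2l.
have [a0|] := eqVneq (enorm a) 0.
  have : \sum_(i < d) a ord0 i ^+ 2 = 0 by rewrite -enorm_sq a0 expr2 mul0r.
  move/eqP; rewrite psumr_eq0; last by move=> i _; rewrite sqr_ge0.
  move/allP => H; rewrite a0 mul0r big1 // => i _.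
  by move: (H i (mem_index_enum _)) => /= ; rewrite sqrf_eq0 => /eqP ->; rewrite mul0r.
move=> an0.
have [b0|bn0] := eqVneq (enorm b) 0.
  have : \sum_(i < d) b ord0 i ^+ 2 = 0 by rewrite -enorm_sq b0 expr2 mul0r.
  move/eqP; rewrite psumr_eq0; last by move=> i _; rewrite sqr_ge0.
  move/allP => H; rewrite b0 mulr0 big1 // => i _.
  by move: (H i (mem_index_enum _)) => /= ; rewrite sqrf_eq0 => /eqP ->; rewrite mulr0.
apply: key; rewrite ?enorm_sq //; rewrite lt_def ?an0 ?bn0 enorm_ge0 //.
Qed.

End Aux.


Section Aux2.
Variables (R : realType) (d : nat).
Local Notation V := 'rV[R]_d.

Lemma my_sup_ge0 (E : set R) : (forall y, E y -> 0 <= y) -> 0 <= sup E.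
Proof.
move=> E0.
have [[y Ey]|nE] := pselect (E !=set0); last first.
  rewrite (_ : E = set0) ?sup0 //; apply/seteqP; split => // z Ez.
  by apply: nE; exists z.
have [hs|hs] := pselect (has_sup E); last by rewrite sup_out.
by apply: le_trans (E0 _ Ey) _; apply: ub_le_sup => //; case: hs.
Qed.

Lemma dnorm_nneg (f : V -> V) x : 0 <= dnorm f x.
Proof. by apply: my_sup_ge0 => _ [v _ <-]; exact: enorm_ge0. Qed.

Lemma Dnorm_nneg (X : set V) (f : V -> V) : 0 <= Dnorm X f.
Proof. by apply: my_sup_ge0 => _ [x _ <-]; exact: dnorm_nneg. Qed.

Lemma dnorm_d0 (f : V -> V) x : d = 0%N -> dnorm f x = 0.
Proof.
move=> d0; rewrite /dnorm.
have -> : [set enorm ('d f x v) | v in [set v : V | enorm v = 1]] = set0.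
  apply/seteqP; split => // _ [v /= + _]; rewrite enorm_d0 //.
  by move=> /esym /eqP; rewrite oner_eq0.
by rewrite sup0.
Qed.

Lemma unit_exists : (0 < d)%N -> exists e : V, enorm e = 1.
Proof.
move=> d0; exists (delta_mx ord0 (Ordinal d0)).
rewrite /enorm (bigD1 (Ordinal d0)) //= big1.
  by rewrite !mxE !eqxx /= expr1n addr0 sqrtr1.
by move=> i ni; rewrite !mxE eqxx /= (negbTE ni) expr0n.
Qed.

Lemma dnorm_conf_eq (f : V -> V) x c : (0 < d)%N ->
  (forall v, enorm ('d f x v) = c * enorm v) -> dnorm f x = c.
Proof.
move=> d0 H; rewrite /dnorm.
have -> : [set enorm ('d f x v) | v in [set v : V | enorm v = 1]] = [set c].
  apply/seteqP; split => [_ [v /= v1 <-]|_ ->]; first by rewrite H v1 mulr1.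
  by have [e e1] := unit_exists d0; exists e => //; rewrite H e1 mulr1.
by rewrite sup1.
Qed.

Lemma dnorm_conf (f : V -> V) x c :
  (forall v, enorm ('d f x v) = c * enorm v) ->
  forall v, enorm ('d f x v) = dnorm f x * enorm v.
Proof.
move=> H v; case: (posnP d) => [d0|d0].
  by rewrite !(enorm_d0 _ d0) mulr0.
by rewrite (dnorm_conf_eq d0 H) H.
Qed.

Lemma conf_comp (f g : V -> V) x : differentiable g x ->
  differentiable f (g x) -> conformal_at g x -> conformal_at f (g x) ->
  [/\ differentiable (f \o g) x, conformal_at (f \o g) x &
      dnorm (f \o g) x = dnorm f (g x) * dnorm g x].
Proof.
move=> dg df [cg cg0 Hg] [cf cf0 Hf].
have E := diff_comp dg df.
have Ev v : 'd (f \o g) x v = 'd f (g x) ('d g x v).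
  by have := congr1 (fun h => h v) E.
have Hc v : enorm ('d (f \o g) x v) = (cf * cg) * enorm v.
  by rewrite Ev Hf Hg mulrA.
split; first exact: differentiable_comp.
  by exists (cf * cg) => //; rewrite mulr_gt0.
case: (posnP d) => [d0|d0]; first by rewrite !dnorm_d0 // mulr0.
by rewrite (dnorm_conf_eq d0 Hc) (dnorm_conf_eq d0 Hf) (dnorm_conf_eq d0 Hg).
Qed.

End Aux2.


Section Words.
Variables (R : realType) (d : nat).
Local Notation V := 'rV[R]_d.
Variables (X U : set V) (I : nat -> set nat) (phi : nat -> nat -> V -> V).

Lemma words_nil m n : words I m n [::] -> n = 0%N.
Proof. by case. Qed.

Lemma words_cons m n a w : words I m n (a :: w) ->
  exists n', [/\ n = n'.+1, I m a & words I m.+1 n' w].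
Proof.
case=> /= sz H; exists (size w); split => //.
  by have := H 0%N; rewrite -sz addn0 => /(_ isT).
split => // k kw; rewrite addSnnS; apply: (H k.+1); by rewrite -sz.
Qed.

Lemma diff_id_ok (x : V) : differentiable (@id V) x /\ forall v, 'd (@id V) x v = v.
Proof. by split; [exact: ex_diff | move=> v; rewrite diff_val]. Qed.

Hypothesis hC1 : forall j i, (1 <= j)%N -> I j i -> C1_conformal_diffeo_into U (phi j i).

Lemma compw_U w : forall m n, (1 <= m)%N -> words I m n w -> forall x, U x ->
  [/\ U (compw phi m w x), differentiable (compw phi m w) x &
      conformal_at (compw phi m w) x].
Proof.
elim: w => [|a w IH] m n m1 hw x Ux /=.
  have [dI dIv] := diff_id_ok x.
  by split => //; exists 1 => // v; rewrite dIv mul1r.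
have [n' [_ Ima hw']] := words_cons hw.
have [Ug dg cg] := IH m.+1 n' (leqW m1) hw' x Ux.
have [sub _ [df _ cf _]] := hC1 m1 Ima.
have [dc cc _] := conf_comp dg (df _ Ug) cg (cf _ Ug).
split => //; apply: sub; by exists (compw phi m.+1 w x).
Qed.

Hypothesis hX : forall j i, (1 <= j)%N -> I j i -> phi j i @` X `<=` X.

Lemma compw_X w : forall m n, (1 <= m)%N -> words I m n w -> forall x, X x ->
  X (compw phi m w x).
Proof.
elim: w => [|a w IH] m n m1 hw x Xx //=.
have [n' [_ Ima hw']] := words_cons hw.
apply: (hX m1 Ima); exists (compw phi m.+1 w x) => //; exact: IH hw' _ _.
Qed.

Lemma Dnorm_ub (f : V -> V) x (K : R) :
  (forall y, X y -> dnorm f y <= K * dnorm f x) -> X x -> dnorm f x <= Dnorm X f.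
Proof.
move=> H Xx.
have hub : has_ubound [set dnorm f y | y in X].
  by exists (K * dnorm f x) => _ [y Xy <-]; exact: H.
by apply: (ub_le_sup hub); exists x.
Qed.

Lemma Dnorm_le (f : V -> V) (M : R) : 0 <= M ->
  (forall x, X x -> dnorm f x <= M) -> Dnorm X f <= M.
Proof.
move=> M0 H; have [[x Xx]|nX] := pselect (X !=set0).
  by apply: ge_sup; [exists (dnorm f x), x | move=> _ [y Xy <-]; exact: H].
rewrite /Dnorm (_ : [set dnorm f x | x in X] = set0) ?sup0 //.
by apply/seteqP; split => // z [y Xy _]; apply: nX; exists y.
Qed.

Hypothesis XU : X `<=` U.
Variable K : R.
Hypothesis hK : forall k l w x y, (1 <= k)%N -> words I k l w -> U x -> U y ->
  dnorm (compw phi k w) x <= K * dnorm (compw phi k w) y.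

Lemma dnorm_le_Dnorm m n w x : (1 <= m)%N -> words I m n w -> X x ->
  dnorm (compw phi m w) x <= Dnorm X (compw phi m w).
Proof.
move=> m1 hw Xx; apply: (@Dnorm_ub _ _ K) => // y Xy.
by apply: hK hw (XU Xy) (XU Xx).
Qed.

Variable eta : R.
Hypothesis eta0 : 0 <= eta.
Hypothesis heta : forall j i, (1 <= j)%N -> I j i -> Dnorm X (phi j i) <= eta.

Lemma Dnorm_words w : forall m n, (1 <= m)%N -> words I m n w ->
  Dnorm X (compw phi m w) <= eta ^+ n.
Proof.
elim: w => [|a w IH] m n m1 hw.
  rewrite (words_nil hw) expr0 /=; apply: Dnorm_le => // x Xx.
  have [dI dIv] := diff_id_ok x.
  case: (posnP d) => [d0|d0]; first by rewrite dnorm_d0.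
  by rewrite (@dnorm_conf_eq _ _ _ _ 1 d0) // => v; rewrite dIv mul1r.
have [n' [-> Ima hw']] := words_cons hw.
have hw1 : words I m 1 [:: a].
  by split => // -[|k] //; rewrite addn0.
rewrite exprS; apply: Dnorm_le; first by rewrite mulr_ge0 // exprn_ge0.
move=> x Xx /=.
have [Ug dg cg] := compw_U (leqW m1) hw' (XU Xx).
have [sub _ [df _ cf _]] := hC1 m1 Ima.
have [_ _ ->] := conf_comp dg (df _ Ug) cg (cf _ Ug).
apply: ler_pM; [exact: dnorm_nneg|exact: dnorm_nneg| |].
  apply: le_trans _ (heta m1 Ima).
  exact: (@dnorm_le_Dnorm m 1 [:: a] _ m1 hw1 (compw_X (leqW m1) hw' Xx)).
apply: le_trans _ (IH _ _ (leqW m1) hw').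
exact: dnorm_le_Dnorm (leqW m1) hw' Xx.
Qed.

End Words.


Section MVT.
Variables (R : realType) (d : nat).
Local Notation V := 'rV[R]_d.

Lemma enormB_sym (x y : V) : enorm (x - y) = enorm (y - x).
Proof. by rewrite -opprB -scaleN1r enormZ normrN normr1 mul1r. Qed.

Lemma mvt_bound (f : V -> V) (S : set V) (a b : V) (M : R) :
  (forall t : R, 0 <= t <= 1 -> S (t *: (b - a) + a)) ->
  (forall z, S z -> differentiable f z) ->
  (forall z v, S z -> enorm ('d f z v) <= M * enorm v) ->
  0 <= M ->
  Defs.edist (f a) (f b) <= M * enorm (b - a).
Proof.
move=> Sseg df dM M0.
rewrite /Defs.edist enormB_sym.
set u := f b - f a.
pose g := fun t : R => t *: (b - a) + a.
have Dg t : differentiable g t /\ forall h, 'd g t h = h *: (b - a).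
  have gE : g = ( *:%R ^~ (b - a)) + cst a by apply/funext.
  rewrite gE; split; first exact: ex_diff.
  by move=> h; rewrite diff_val /= addr0.
pose F := f \o g.
have DF (t : R) : 0 <= t <= 1 -> differentiable F t /\ 'd F t 1 = 'd f (g t) (b - a).
  move=> t01; have [dg dgv] := Dg t.
  have dfg := df _ (Sseg _ t01).
  split; first exact: differentiable_comp.
  by rewrite (diff_comp dg dfg) /= dgv scale1r.
pose h := \sum_(i < d) (u ord0 i \*: (fun t => F t ord0 i)).
pose dh := fun t => \sum_(i < d) (u ord0 i * ('d f (g t) (b - a)) ord0 i).
have hE (t : R) : h t = \sum_(i < d) u ord0 i * F t ord0 i.
  by rewrite /h fct_sumE.
have Hder (t : R) : 0 <= t <= 1 -> is_derive t 1 h (dh t).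
  move=> t01; have [dF dFv] := DF t t01.
  have dFd : derivable F t 1 by exact: diff_derivable.
  rewrite /dh; apply: is_derive_sum => i.
  apply: is_deriveZ.
  have ci : derivable (fun t0 => F t0 ord0 i) t 1 by move/derivable_mxP: dFd.
  apply: DeriveDef => //.
  have := derive_mx dFd; move/(congr1 (fun M' : 'M[R]_(1, d) => M' ord0 i)); rewrite mxE => <-.
  by rewrite deriveE // dFv.
have [c c01 Hc] : exists2 c, c \in `[0, 1]%R & h 1 - h 0 = dh c * (1 - 0).
  apply: MVT_segment => //.
    move=> x; rewrite in_itv /= => /andP[x0 x1]; apply: Hder.
    by rewrite !ltW.
  apply: derivable_within_continuous => x; rewrite in_itv /= => /andP[x0 x1].
  by have := Hder x; rewrite x0 x1 => /(_ isT) [].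
have c01' : 0 <= c <= 1 by move: c01; rewrite in_itv.
have hu : h 1 - h 0 = enorm u ^+ 2.
  rewrite !hE -sumrB enorm_sq; apply: eq_bigr => i _.
  rewrite -mulrBr /F /g /= scale1r scale0r add0r subrK.
  by rewrite expr2 /u !mxE.
rewrite subr0 mulr1 hu in Hc.
have Hdh : dh c <= enorm u * (M * enorm (b - a)).
  apply: le_trans (cauchy_schwarz u ('d f (g c) (b - a))) _.
  by rewrite ler_wpM2l ?enorm_ge0 // dM //; apply: Sseg.
have [u0|upos] := eqVneq (enorm u) 0.
  by rewrite u0 mulr_ge0 ?enorm_ge0.
have upos' : 0 < enorm u by rewrite lt_def upos enorm_ge0.
rewrite -(ler_pM2l upos') -expr2 Hc; exact: Hdh.
Qed.

End MVT.


Section Reals.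
Variable R : realType.

Lemma powR_natpow (a r : R) n : 0 <= a -> (a ^+ n) `^ r = (a `^ r) ^+ n.
Proof. by move=> a0; rewrite -powR_mulrn // -powRrM mulrC powRrM powR_mulrn ?powR_ge0. Qed.

Lemma liminf_small (u : nat -> \bar R) : (limn_einf u <= 0)%E ->
  forall e : R, 0 < e -> forall N, exists n, (N <= n)%N /\ (u n < e%:E)%E.
Proof.
move=> hu e e0 N; apply: contrapT => H.
have Hn n : (N <= n)%N -> (e%:E <= u n)%E.
  move=> Nn; rewrite leNgt; apply/negP => un; apply: H; by exists n.
have : (e%:E <= limn_einf u)%E.
  rewrite limn_einf_lim; apply: lime_ge; first exact: is_cvg_einfs.
  exists N => // m /= Nm; apply: le_ereal_inf_tmp => _ [k /= mk <-].
  by apply: Hn; apply: leq_trans mk.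
by move=> /le_trans /(_ hu); rewrite lee_fin leNgt e0.
Qed.

Lemma sum_div (a : nat -> \bar R) N L :
  \sum_(0 <= i < (N * L)%N) a (i %/ N)%N = (\sum_(0 <= j < L) a j) *+ N.
Proof.
elim: L => [|L IH]; first by rewrite muln0 !big_geq // mul0rn.
rewrite mulnS addnC (big_cat_nat _ (leq_addr _ _)) //= IH big_nat_recr //=.
rewrite mulrnDl; congr (_ + _)%E.
rewrite -{1}(add0n (N * L)%N) big_addn addnC addnK.
rewrite (@eq_big_nat _ _ _ 0 N _ (fun=> a L)); first by rewrite sumr_const_nat subn0.
move=> i /andP[_ iN]; have N0 : (0 < N)%N by apply: leq_ltn_trans iN.
by rewrite addnC mulnC divnMDl // divn_small // addn0.
Qed.

Lemma lee_natmul (x y : \bar R) n : (x <= y)%E -> ((x *+ n)%R <= (y *+ n)%R)%E.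
Proof. by move=> xy; elim: n => [|n IH]; rewrite ?mulr0n // !mulrS leeD. Qed.

Lemma series_div_le (hw a : nat -> \bar R) N : (0 < N)%N ->
  (forall i, (0 <= hw i)%E) -> (forall j, (0 <= a j)%E) ->
  (forall i, (hw i <= a (i %/ N)%N)%E) ->
  (\sum_(0 <= i <oo) hw i <= ((\sum_(0 <= j <oo) a j) *+ N)%R)%E.
Proof.
move=> N0 hw0 a0 hwa.
apply: lime_le; first exact: is_cvg_nneseries.
exists 0%N => // L _ /=.
have LNL : (L <= N * L)%N by rewrite leq_pmull.
apply: (@le_trans _ _ (\sum_(0 <= i < N * L) hw i)).
  rewrite (@big_cat_nat _ _ _ L 0 (N * L)%N _ _ (leq0n L) LNL) /= leeDl //.
  by apply: sume_ge0 => i _.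
apply: (@le_trans _ _ (\sum_(0 <= i < N * L) a (i %/ N)%N)).
  by apply: lee_sum => i _.
rewrite sum_div; apply: lee_natmul.
by apply: nneseries_lim_ge => n _ _.
Qed.

End Reals.


Section Haus.
Variables (R : realType) (d : nat).
Local Notation V := 'rV[R]_d.

Lemma hweight_ge0 (t : R) (A : set V) : 0 <= hweight t A.
Proof. by rewrite /hweight; case: pselect => ? //; exact: powR_ge0. Qed.

Lemma hausdorff_zero (A : set V) (t : R) :
  (forall delta eps, 0 < delta -> 0 < eps -> exists Us : nat -> set V,
     [/\ A `<=` \bigcup_i Us i,
         (forall i x y, Us i x -> Us i y -> Defs.edist x y <= delta) &
        (\sum_(0 <= i <oo) (hweight t (Us i))%:E <= eps%:E)%E]) ->
  hausdorff_measure t A = 0%E.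
Proof.
move=> H.
have pre0 delta : 0 < delta -> hausdorff_pre t delta A = 0%E.
  move=> d0; apply/eqP; rewrite eq_le; apply/andP; split.
    apply/lee_addgt0Pr => e e0; rewrite add0e.
    have [Us [AU Ud Us_e]] := H delta e d0 e0.
    apply: le_trans Us_e; apply: ereal_inf_lbound; exists Us => //.
  apply: le_ereal_inf_tmp => _ [Us _ <-].
  by apply: nneseries_ge0 => n _ _; rewrite lee_fin hweight_ge0.
rewrite /hausdorff_measure.
have -> : [set hausdorff_pre t delta A | delta in [set delta : R | 0 < delta]] = [set 0%E].
  apply/seteqP; split => [_ [delta /= d0 <-]|_ ->]; first by rewrite pre0.
  by exists 1; [exact: ltr01 | exact: pre0 ltr01].
exact: ereal_sup1.
Qed.

Lemma dim_le (A : set V) (B : \bar R) : (0 <= B)%E ->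
  (forall t, 0 < t -> (B < t%:E)%E -> hausdorff_measure t A = 0%E) ->
  (hausdorff_dim A <= B)%E.
Proof.
move=> B0 H; case: B B0 H => [b b0 H|_ _|]; [|by rewrite leey|by []].
move: b0; rewrite lee_fin => b0.
apply/lee_addgt0Pr => e e0; rewrite -EFinD.
apply: ereal_inf_lbound; exists (b + e) => //; split.
  by rewrite addr_ge0 // ltW.
by apply: H; rewrite ?lte_fin ?ltrDl //; apply: lt_le_trans e0 _; rewrite lerDr.
Qed.

End Haus.


Section WordEdist.
Variables (R : realType) (d : nat).
Local Notation V := 'rV[R]_d.
Variables (X U : set V) (I : nat -> set nat) (phi : nat -> nat -> V -> V).
Hypothesis hC1 : forall j i, (1 <= j)%N -> I j i -> C1_conformal_diffeo_into U (phi j i).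
Hypothesis XU : X `<=` U.
Variable K : R.
Hypothesis K0 : 0 <= K.
Hypothesis hK : forall k l w x y, (1 <= k)%N -> words I k l w -> U x -> U y ->
  dnorm (compw phi k w) x <= K * dnorm (compw phi k w) y.

Lemma ball_convex (c a b : V) (rho t : R) : 0 <= t <= 1 ->
  ball c rho a -> ball c rho b -> ball c rho (t *: (b - a) + a).
Proof.
move=> /andP[t0 t1]; rewrite -!ball_normE /= => ha hb.
have -> : c - (t *: (b - a) + a) = (1 - t) *: (c - a) + t *: (c - b).
  by rewrite scalerBr !scalerBl scale1r; apply/rowP => i; rewrite !mxE; ring.
apply: le_lt_trans (ler_normD _ _) _.
rewrite !normrZ !ger0_norm ?subr_ge0 //.
have [->|tpos] := eqVneq t 0; first by rewrite subr0 mul1r mul0r addr0.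
have [->|t1'] := eqVneq t 1; first by rewrite subrr mul0r add0r mul1r.
have tp : 0 < t by rewrite lt_def tpos.
have tq : 0 < 1 - t by rewrite subr_gt0 lt_def eq_sym t1' t1.
have h1 : (1 - t) * `|c - a| < (1 - t) * rho by rewrite ltr_pM2l.
have h2 : t * `|c - b| < t * rho by rewrite ltr_pM2l.
lra.
Qed.

Lemma word_edist m n w (c x1 x2 : V) (rho Mb : R) :
  (1 <= m)%N -> words I m n w -> X x1 -> X x2 ->
  ball c rho `<=` U -> ball c rho x1 -> ball c rho x2 ->
  (forall x, X x -> `|x| <= Mb) ->
  Defs.edist (compw phi m w x1) (compw phi m w x2) <=
    K * Dnorm X (compw phi m w) * (d%:R * (2 * Mb)).
Proof.
move=> m1 hw X1 X2 bU b1 b2 hMb.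
set f := compw phi m w.
have M0 : 0 <= K * Dnorm X f by rewrite mulr_ge0 // Dnorm_nneg.
apply: le_trans (mvt_bound (S := ball c rho) _ _ _ M0) _.
- by move=> t t01; apply: ball_convex.
- by move=> z bz; have [] := compw_U hC1 m1 hw (bU _ bz).
- move=> z v bz; have [_ _ [cz cz0 Hz]] := compw_U hC1 m1 hw (bU _ bz).
  rewrite (dnorm_conf Hz) ler_wpM2r ?enorm_ge0 //.
  apply: le_trans (hK m1 hw (bU _ bz) (XU X1)) _.
  by rewrite ler_wpM2l // (dnorm_le_Dnorm XU hK m1 hw X1).
- rewrite ler_wpM2l //; apply: le_trans (enorm_le _) _.
  rewrite ler_wpM2l // mulr2n mulrDl mul1r.
  apply: le_trans (ler_normB _ _) _.
  by rewrite lerD // hMb.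
Qed.

End WordEdist.


Lemma Bowen_ge0 (R : realType) (d : nat) (X : set 'rV[R]_d) I phi :
  (0 <= Bowen X I phi)%E.
Proof.
rewrite /Bowen; case: pselect => // hS.
have [x Sx] : exists x, [set t%:E | t in [set t : R | 0 <= t /\
    (0 < lower_pressure X I phi t)%E]] x.
  apply: contrapT => nS; apply: hS; apply/seteqP; split => // x Sx.
  by apply: nS; exists x.
apply: le_trans (ereal_sup_ubound Sx).
by case: Sx => t [t0 _] <-; rewrite lee_fin.
Qed.

Lemma Bowen_pressure (R : realType) (d : nat) (X : set 'rV[R]_d) I phi (s : R) :
  0 <= s -> (Bowen X I phi < s%:E)%E -> (lower_pressure X I phi s <= 0)%E.
Proof.
move=> s0 Bs; rewrite leNgt; apply/negP => Ps.
have Ss : [set t%:E | t in [set t : R | 0 <= t /\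
    (0 < lower_pressure X I phi t)%E]] s%:E by exists s.
move: Bs; rewrite /Bowen; case: pselect => [S0|?].
  by move=> _; move: Ss; rewrite S0.
by rewrite ltNge (ereal_sup_ubound Ss).
Qed.

Lemma Zn_bound (R : realType) (d : nat) (X : set 'rV[R]_d) I phi (s e : R) n :
  (0 < n)%N ->
  (((n%:R^-1)%:E * elog (Zn X I phi n s)) < e%:E)%E ->
  (Zn X I phi n s <= (expR (n%:R * e))%:E)%E.
Proof.
move=> n0 H.
have Z0 : (0 <= Zn X I phi n s)%E.
  by apply: esum_ge0 => w _; rewrite lee_fin powR_ge0.
have ni : 0 < n%:R^-1 :> R by rewrite invr_gt0 ltr0n.
move: H Z0; case: (Zn X I phi n s) => [r| |] //=.
- rewrite lee_fin => H r0; case: ifPn H => [r0'|].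
    by move=> _; apply: le_trans r0' _; rewrite ltW // expR_gt0.
  rewrite -ltNge => rpos; rewrite -EFinM lte_fin => H.
  rewrite lee_fin -ler_ln ?posrE ?expR_gt0 // expRK.
  have nR : 0 < n%:R :> R by rewrite ltr0n.
  have : n%:R * (n%:R^-1 * ln r) < n%:R * e by rewrite ltr_pM2l.
  by rewrite mulrA divff ?mul1r ?gt_eqF // => /ltW.
- by rewrite gt0_muley ?lte_fin // ltNge leey.
Qed.

Lemma Zn_series (R : realType) (d : nat) (X : set 'rV[R]_d) I phi n (s : R) :
  (\sum_(0 <= j <oo)
     (if pselect (exists w, words I 1 n w /\ pickle w = j)
      then ((Dnorm X (compw phi 1 (odflt [::] (unpickle j)))) `^ s)%:E
      else 0%E))%E = Zn X I phi n s.
Proof.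
set P := fun j : nat => exists w, words I 1 n w /\ pickle w = j.
set G := fun j : nat => ((Dnorm X (compw phi 1 (odflt [::] (unpickle j)))) `^ s)%:E.
have -> : (\sum_(0 <= j <oo) (if pselect (P j) then G j else 0%E) =
          \sum_(0 <= j <oo | `[< P j >]) G j)%E.
  rewrite [RHS]eseries_mkcond; apply: eq_eseriesr => j _.
  by case: pselect => Pj; case: asboolP.
rewrite nneseries_esum; last by move=> j _; rewrite lee_fin powR_ge0.
have -> : [set x | `[< P x >]] = P by apply/seteqP; split => x /asboolP.
rewrite (@reindex_esum _ _ _ (words I 1 n) P pickle); last first.
  split.
  - by move=> w hw; exists w.
  - by move=> w1 w2 _ _; apply: (pcan_inj pickleK).
  - by move=> j [w [hw <-]]; exists w.
by rewrite /Zn; apply: eq_esum => w _; rewrite /G pickleK.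
Qed.


Unset Implicit Arguments.

Theorem lemma2p8 (R : realType) (d : nat) (X : set 'rV[R]_d)
    (I : nat -> set nat) (phi : nat -> nat -> 'rV[R]_d -> 'rV[R]_d) :
  compact X ->
  closure (interior X) = X ->
  smooth_boundary X \/ convex_set X ->
  is_NCIFS X I phi ->
  (hausdorff_dim (limit_set X I phi) <= Bowen X I phi)%E.
Proof.
move=> cX _ _ [hX _ [U [oU _ XU [hC1 [K K1 hK]]]] [eta eta1 heta]].
have K0 : 0 <= K by apply: le_trans K1; rewrite ler01.
pose et := Num.max eta 2^-1.
have et0 : 0 < et by rewrite lt_max invr_gt0 ltr0n orbT.
have et1 : et < 1 by rewrite gt_max eta1 invf_lt1 ?ltr1n.
have hetaet : forall j i, (1 <= j)%N -> I j i -> Dnorm X (phi j i) <= et.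
  by move=> j i j1 Iji; apply: le_trans (heta j i j1 Iji) _; rewrite le_max lexx.
pose rad (x : 'rV[R]_d) : R :=
  match pselect (exists2 e : R, 0 < e & ball x e `<=` U) with
  | left P => s2val (cid2 P) | right _ => 1 end.
have hrad : forall x, X x -> 0 < rad x /\ ball x (rad x) `<=` U.
  move=> x Xx; rewrite /rad; case: pselect => [P|nP].
    by case: (cid2 P) => /= e e0 be.
  exfalso; apply: nP; have := oU x (XU _ Xx).
  by move/nbhs_ballP => [e e0 be]; exists e.
have := cX; rewrite compact_cover => /(_ _ X (fun x => ball x (rad x))) [].
- by move=> x _; exact: ball_open.
- move=> x Xx; exists x => //; apply: ballxx; by case: (hrad x Xx).
move=> D' D'X XD'.
pose cs : seq 'rV[R]_d := finmap.enum_fset D'.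
pose N := size cs.
pose ctr k := nth 0 cs k.
have ctrX : forall k, (k < N)%N -> X (ctr k).
  move=> k kN; have := D'X (ctr k); rewrite in_setE; apply; exact: mem_nth.
have Xcov : forall x, X x -> exists2 k, (k < N)%N & ball (ctr k) (rad (ctr k)) x.
  move=> x /XD' [c /= cD bc]; exists (index c cs); first by rewrite index_mem.
  by rewrite /ctr nth_index.
have [Mb Mb0 hMb] : exists2 Mb : R, 0 <= Mb & forall x, X x -> `|x| <= Mb.
  have := compact_bounded cX => /pinfty_ex_gt0 [M M0 HM].
  by exists M; [exact: ltW | move=> x Xx; exact: HM].
pose C := K * (d%:R * (2 * Mb)).
have C0 : 0 <= C by rewrite !mulr_ge0.
apply: dim_le (Bowen_ge0 X I phi) _ => t t0 Bt.
have [b Bb] : exists b, Bowen X I phi = b%:E.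
  move: (Bowen_ge0 X I phi) Bt; case: (Bowen X I phi) => [b| |] //.
  - by move=> _ _; exists b.
have b0 : 0 <= b by move: (Bowen_ge0 X I phi); rewrite Bb lee_fin.
have bt : b < t by move: Bt; rewrite Bb lte_fin.
pose s := (b + t) / 2.
have s0 : 0 < s by rewrite /s; lra.
have st : s < t by rewrite /s; lra.
have bs : b < s by rewrite /s; lra.
have Ps : (lower_pressure X I phi s <= 0)%E.
  by apply: Bowen_pressure; [exact: ltW | rewrite Bb lte_fin].
pose q := et `^ (t - s).
have q0 : 0 < q by apply: powR_gt0.
have q1 : q < 1.
  have h : et `^ (t - s) < 1 `^ (t - s).
    by apply: gt0_ltr_powR; rewrite ?subr_gt0 ?nnegrE ?ltW.
  by rewrite powR1 in h.
pose eps0 := - ln q / 2.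
have lnq : ln q < 0 by apply: ln_lt0; rewrite q0 q1.
have eps00 : 0 < eps0 by rewrite /eps0; lra.
pose r := q * expR eps0.
have r0 : 0 < r by rewrite mulr_gt0 ?expR_gt0.
have r1 : r < 1.
  rewrite /r -{1}(lnK q0) -expRD expR_lt1 /eps0; lra.
apply: hausdorff_zero => delta eps d0 e0.
pose Cst := N%:R * C `^ t.
have Cst0 : 0 <= Cst by rewrite mulr_ge0 ?powR_ge0.
have [N1 _ HN1] : \forall n \near \oo, `|r ^+ n| < eps / (Cst + 1).
  have := @cvg_expr _ r; rewrite ger0_norm ?ltW // => /(_ r1).
  by move/cvgr0Pnorm_lt; apply; rewrite divr_gt0 // ltr_wpDl.
have [N2 _ HN2] : \forall n \near \oo, `|et ^+ n| < delta / (C + 1).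
  have := @cvg_expr _ et; rewrite ger0_norm ?ltW // => /(_ et1).
  by move/cvgr0Pnorm_lt; apply; rewrite divr_gt0 // ltr_wpDl.
have [n [Nn un]] := liminf_small Ps eps00 (maxn (maxn N1 N2) 1).
have n0 : (0 < n)%N by apply: leq_trans Nn; rewrite leq_max orbT.
have Zb := Zn_bound n0 un.
have rn : Cst * r ^+ n <= eps.
  have h : r ^+ n < eps / (Cst + 1).
    have := HN1 n; rewrite /= ger0_norm ?exprn_ge0 ?ltW //; apply.
    by apply: leq_trans _ Nn; rewrite !leq_max leqnn ?orbT.
  have hp : 0 < Cst + 1 by lra.
  have h2 : (Cst + 1) * r ^+ n < (Cst + 1) * (eps / (Cst + 1)) by rewrite ltr_pM2l.
  have e1 : (Cst + 1) * (eps / (Cst + 1)) = eps by field; rewrite gt_eqF.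
  have rn0 : 0 <= r ^+ n by rewrite exprn_ge0 ?ltW.
  rewrite e1 in h2; nra.
have etn : C * et ^+ n <= delta.
  have h : et ^+ n < delta / (C + 1).
    have := HN2 n; rewrite /= ger0_norm ?exprn_ge0 ?ltW //; apply.
    by apply: leq_trans _ Nn; rewrite !leq_max leqnn ?orbT.
  have hp : 0 < C + 1 by lra.
  have h2 : (C + 1) * et ^+ n < (C + 1) * (delta / (C + 1)) by rewrite ltr_pM2l.
  have e1 : (C + 1) * (delta / (C + 1)) = delta by field; rewrite gt_eqF.
  have rn0 : 0 <= et ^+ n by rewrite exprn_ge0 ?ltW.
  rewrite e1 in h2; nra.
pose Us (i : nat) : set 'rV[R]_d := [set z | exists w x,
  [/\ words I 1 n w, pickle w = (i %/ N)%N, (i %% N < N)%N, X x &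
     ball (ctr (i %% N)%N) (rad (ctr (i %% N)%N)) x /\ z = compw phi 1 w x]].
have Usd : forall i y1 y2, Us i y1 -> Us i y2 -> exists w,
    [/\ words I 1 n w, pickle w = (i %/ N)%N &
       Defs.edist y1 y2 <= C * Dnorm X (compw phi 1 w)].
  move=> i y1 y2 [w1 [x1 [hw1 pw1 iN X1 [b1 ->]]]] [w2 [x2 [hw2 pw2 _ X2 [b2 ->]]]].
  have ew : w2 = w1 by apply: (pcan_inj pickleK); rewrite pw1 pw2.
  subst w2; exists w1; split => //.
  have [rc bcU] := hrad _ (ctrX _ iN).
  have := word_edist hC1 XU K0 hK (isT : (0 < 1)%N) hw1 X1 X2 bcU b1 b2 hMb.
  by rewrite /C mulrAC.
have Dw : forall w, words I 1 n w -> Dnorm X (compw phi 1 w) <= et ^+ n.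
  by move=> w hw; apply: (Dnorm_words hC1 hX XU hK (ltW et0) hetaet (isT : (0 < 1)%N) hw).
exists Us; split.
- move=> z Jz; have [w hw [x Xx xz]] := Jz n Logic.I.
  have [k kN bk] := Xcov x Xx.
  have N0 : (0 < N)%N by apply: leq_ltn_trans kN.
  exists (pickle w * N + k)%N => //.
  exists w, x; split => //.
  + by rewrite divnMDl // divn_small // addn0.
  + by rewrite modnMDl modn_small.
  + by rewrite modnMDl modn_small.
- move=> i y1 y2 h1 h2; have [w [hw _ hd]] := Usd i y1 y2 h1 h2.
  apply: le_trans hd _; apply: le_trans _ etn; rewrite ler_wpM2l //.
  exact: Dw.
pose g j : \bar R := if pselect (exists w, words I 1 n w /\ pickle w = j)
  then ((Dnorm X (compw phi 1 (odflt [::] (unpickle j)))) `^ s)%:E else 0%E.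
pose Cq := C `^ t * q ^+ n.
have Cq0 : 0 <= Cq by rewrite mulr_ge0 ?powR_ge0 ?exprn_ge0 ?ltW.
have g0 : forall j, (0 <= g j)%E.
  by move=> j; rewrite /g; case: pselect => ? //; rewrite lee_fin powR_ge0.
have hwb : forall i, ((hweight t (Us i))%:E <= Cq%:E * g (i %/ N)%N)%E.
  move=> i; rewrite /hweight; case: pselect => [Ue|Une].
    by rewrite mule_ge0 ?lee_fin.
  have [z Uz] : exists z, Us i z.
    apply: contrapT => nz; apply: Une; apply/seteqP; split => // y Uy.
    by apply: nz; exists y.
  have [w [hw pw _]] := Usd i z z Uz Uz.
  have gE : g (i %/ N)%N = ((Dnorm X (compw phi 1 w)) `^ s)%:E.
    rewrite /g; case: pselect => [?|nP]; last by exfalso; apply: nP; exists w.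
    have uw : unpickle (i %/ N)%N = Some w by rewrite -pw pickleK.
    by rewrite uw.
  rewrite gE -EFinM lee_fin.
  set D := Dnorm X (compw phi 1 w).
  have D0 : 0 <= D := Dnorm_nneg _ _.
  have Det : D <= et ^+ n := Dw w hw.
  have diam : ediam (Us i) <= C * D.
    apply: ge_sup.
      by exists (Defs.edist z z); exists z => //; exists z.
    move=> _ [y1 h1 [y2 h2 <-]]; have [w' [hw' pw' hd]] := Usd i y1 y2 h1 h2.
    have ew : w' = w by apply: (pcan_inj pickleK); rewrite pw pw'.
    by move: hd; rewrite ew.
  have diam0 : 0 <= ediam (Us i).
    by apply: my_sup_ge0 => _ [y1 _ [y2 _ <-]]; exact: enorm_ge0.
  apply: (@le_trans _ _ ((C * D) `^ t)).
    apply: ge0_ler_powR; rewrite ?nnegrE //; [exact: ltW|exact: mulr_ge0].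
  rewrite powRM // /Cq -mulrA ler_wpM2l ?powR_ge0 //.
  have [->|Dpos] := eqVneq D 0.
    by rewrite powR0 ?gt_eqF // mulr_ge0 ?exprn_ge0 ?powR_ge0 ?ltW.
  have tE : D `^ t = D `^ s * D `^ (t - s).
    by rewrite -powRD ?Dpos ?implybT //; congr (_ `^ _); ring.
  rewrite tE mulrC ler_wpM2r ?powR_ge0 // /q -powR_natpow; last exact: ltW.
  apply: ge0_ler_powR; rewrite ?nnegrE ?subr_ge0 ?exprn_ge0 //; exact: ltW.
have natE : forall (x : R) m, ((x%:E) *+ m)%R = (x *+ m)%:E.
  by move=> x; elim=> [|m IH]; rewrite ?mulr0n // !mulrS EFinD IH.
case: (posnP N) => [N0|Npos].
  rewrite eseries0 ?lee_fin ?ltW // => i _ _.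
  rewrite /hweight; case: pselect => // Une; exfalso; apply: Une.
  apply/seteqP; split => // y [w [x [_ _ iN _]]].
  by move: iN; rewrite N0.
apply: le_trans (@series_div_le _ _ (fun j => Cq%:E * g j)%E _ Npos _ _ hwb) _.
- by move=> i; rewrite lee_fin hweight_ge0.
- by move=> j; rewrite mule_ge0 ?lee_fin.
rewrite nneseriesZl; last by move=> j _; exact: g0.
rewrite Zn_series.
apply: (@le_trans _ _ (((Cq * expR (n%:R * eps0))%:E) *+ N)%R).
  apply: lee_natmul; rewrite [X in (_ <= X)%E]EFinM; apply: lee_wpmul2l => //; rewrite lee_fin.
rewrite natE lee_fin.
rewrite -[_ *+ N]mulr_natl.
have rE : r ^+ n = q ^+ n * expR eps0 ^+ n by rewrite -exprMn.
have -> : N%:R * (Cq * expR (n%:R * eps0)) = Cst * r ^+ n.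
  by rewrite rE /Cst /Cq expRM_natl; ring.
exact: rn.
Qed.
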